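(* Let $(d,e;m)\in\mathcal{E}$ be such that $\mu(d,e;m)(a)>\sqrt{a/2}$ for some $a\geq 1$, and let $I$ be a maximal nonempty open interval on which $\mu(d,e;m)(a)>\sqrt{a/2}$. Then there exists a unique $a_0\in I$ with $l(a_0)=l(m)$. Moreover $l(a)\geq l(a_0)$ for all $a\in I$.
   Context: Weight expansion: for real $a\geq1$, $w(a)=(w_1(a),w_2(a),\dots)$ is the nonincreasing sequence of side lengths of squares obtained by successively cutting off largest possible squares from a $1\times a$ rectangle; for rational $a=[l_0;l_1,\dots,l_N]$ it is the finite sequence $(1^{\times l_0},x_1^{\times l_1},\dots,x_N^{\times l_N})$ with $x_0=1$, $x_1=a-l_0$, $x_i=x_{i-2}-l_{i-1}x_{i-1}$, and for irrational $a$ it is infinite. Each $w_i$ is a continuous piecewise linear function of $a$. $l(a)$ denotes the length of $w(a)$ (possibly $\infty$), and $l(m)$ the number of positive entries of the vector $m$. The set $\mathcal{E}$: a Cremona transform of an integer tuple $(\delta;n_1,\dots,n_k)$ with $n_1\geq\dots\geq n_k$ is $(2\delta-n_1-n_2-n_3;\delta-n_2-n_3,\delta-n_1-n_3,\delta-n_1-n_2,n_4,\dots,n_k)$; a Cremona move is a Cremona transform followed by a permutation of the entries after the semicolon. $\mathcal{E}$ consists of $(0,0;-1)$ together with all integer tuples $(d,e;m_1,\dots,m_M)$ with $d,e\geq0$, $m_1\geq\dots\geq m_M\geq0$, satisfying $\sum m_i=2(d+e)-1$, $\sum m_i^2=2de+1$, and such that $(d+e-m_1;d-m_1,e-m_1,m_2,\dots,m_M)$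 reduces to $(0;-1,0,\dots,0)$ by repeated Cremona moves. $\mu(d,e;m)(a):=\langle m,w(a)\rangle/(d+e)=\sum_i m_iw_i(a)/(d+e)$. *)

(* Defs.v *)
From HB Require Import structures.
From mathcomp Require Import all_boot all_order all_algebra.
From mathcomp Require Import reals.
From Stdlib Require Import Relations.
Set Implicit Arguments. Unset Strict Implicit. Unset Printing Implicit Defensive.
Import Order.TTheory GRing.Theory Num.Theory.
Local Open Scope ring_scope.

Section Weights.
Variable R : realType.

(* State (L, S) with L >= S >= 0 : current rectangle L x S.  Cutting the
   largest square (side S) leaves an (L - S) x S rectangle, re-sorted.
   Once S = 0 the state is stationary. *)
Definition wstep (p : R * R) : R * R :=
  let: (L, s) := p in if s <= L - s then (L - s, s) else (s, L - s).

(* [w i a] = w_{i+1}(a) (0-indexed): side of the (i+1)-st square cut from the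
   1 x a rectangle; it is 0 once the expansion has terminated. *)
Definition w (i : nat) (a : R) : R := (iter i wstep (a, 1)).2.

(* l(a) = n  (the number of positive weights is exactly n) *)
Definition wlen_eq (a : R) (n : nat) : Prop := forall i, 0 < w i a <-> (i < n)%N.

(* l(b) <= l(a)  (lengths in nat \cup {oo}; weights are positive on an
   initial segment) *)
Definition wlen_le (b a : R) : Prop := forall i, 0 < w i b -> 0 < w i a.

Definition mu_cls (d e : int) (m : seq int) (a : R) : R :=
  (\sum_(i < size m) (nth 0 m i)%:~R * w i a) / (d + e)%:~R.
End Weights.

Definition lm (m : seq int) : nat := count (fun x : int => 0 < x) m.

Definition ge_int (x y : int) : bool := y <= x.

Definition cremona (t : int * seq int) : int * seq int :=
  let: (dl, n) := t in
  let n1 := nth 0 n 0 in let n2 := nth 0 n 1 in let n3 := nth 0 n 2 in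
  (2 * dl - n1 - n2 - n3,
   [:: dl - n2 - n3; dl - n1 - n3; dl - n1 - n2] ++ drop 3 n).

Definition cremona_move (t t' : int * seq int) : Prop :=
  [/\ sorted ge_int t.2, (3 <= size t.2)%N,
      t'.1 = (cremona t).1 & perm_eq (cremona t).2 t'.2].

Definition red_step (t t' : int * seq int) : Prop :=
  cremona_move t t' \/
  (t'.1 = t.1 /\ perm_eq t.2 t'.2) \/
  (t'.1 = t.1 /\ t'.2 = rcons t.2 0).

Definition reduces_to_exc (t : int * seq int) : Prop :=
  exists k : nat, clos_refl_trans _ red_step t (0, (-1) :: nseq k 0).

Definition in_calE (d e : int) (m : seq int) : Prop :=
  (d = 0 /\ e = 0 /\ m = [:: -1]) \/
  [/\ 0 <= d /\ 0 <= e, sorted ge_int m /\ all (fun x : int => 0 <= x) m,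
      \sum_(x <- m) x = 2 * (d + e) - 1,
      \sum_(x <- m) x ^+ 2 = 2 * d * e + 1 &
      reduces_to_exc (d + e - head 0 m,
                      [:: d - head 0 m, e - head 0 m & behead m])].

(* I is a nonempty interval contained in [1, +oo), open relative to the
   domain [1, +oo) of the weight expansion, on which P holds. *)
Definition good_interval (R : realType) (P : R -> Prop) (I : R -> Prop) : Prop :=
  [/\ exists x, I x,
      forall x, I x -> 1 <= x /\ P x,
      forall x y z, I x -> I y -> x <= z -> z <= y -> I z &
      forall x, I x -> exists2 eps : R, 0 < eps &
        forall y, 1 <= y -> `|y - x| < eps -> I y].

Definition maximal_good_interval (R : realType) (P : R -> Prop) (I : R -> Prop)
  : Prop :=
  good_interval P I /\
  forall J, good_interval P J -> (forall x, I x -> J x) -> forall x, J x -> I x.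

(* Main.v *)
Require Import Defs.
From mathcomp Require Import all_boot all_order all_algebra.
From mathcomp Require Import reals.
From mathcomp Require Import classical_sets ring lra.
From Stdlib Require Import Classical.
Import Order.TTheory GRing.Theory Num.Theory.
Local Open Scope ring_scope.

Section W.
Context {R : realType}.
Implicit Types (a b : R).

Definition st k a : R * R := iter k (@wstep R) (a, 1).

Lemma wE k a : w k a = (st k a).2. Proof. by []. Qed.
Lemma stS k a : st k.+1 a = wstep (st k a). Proof. by rewrite /st iterS. Qed.

Lemma wstep_inv (L s : R) : 0 <= s <= L ->
  let p := wstep (L, s) in [/\ 0 <= p.2 <= p.1, p.2 <= s & p.1 * p.2 = L * s - s ^+ 2].
Proof.
case/andP=> h1 h2 /=; case: ifP => h /=.
  split; [apply/andP; split|..]; lra.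
move/negbT: h; rewrite -ltNge => h.
split; [apply/andP; split|..]; lra.
Qed.

Lemma st_inv k a : 1 <= a ->
  [/\ 0 <= (st k a).2 <= (st k a).1, (st k a).2 <= 1 &
      \sum_(j < k) (w j a) ^+ 2 + (st k a).1 * (st k a).2 = a].
Proof.
move=> a1; elim: k => [|k [IH1 IH2 IH3]].
  rewrite big_ord0 /= add0r mulr1; split => //; apply/andP; split => //; lra.
rewrite stS; case E: (st k a) => [L s]; rewrite E /= in IH1 IH2 IH3.
have [h1 h2 h3] := @wstep_inv L s IH1.
split => //; first lra.
rewrite big_ord_recr /= wE E -[X in _ = X]IH3.
move: h3 => /= ->; lra.
Qed.

Lemma w_ge0 k a : 1 <= a -> 0 <= w k a.
Proof. by move=> a1; have [/andP[]] := st_inv k a a1. Qed.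

Lemma w_le1 k a : 1 <= a -> w k a <= 1.
Proof. by move=> a1; have [] := st_inv k a a1. Qed.

Lemma w_zeroS k a : 1 <= a -> w k a = 0 -> w k.+1 a = 0.
Proof.
move=> a1; have [/andP[h1 h2] _ _] := st_inv k a a1.
rewrite !wE stS; case: (st k a) h1 h2 => L s /= h1 h2 s0.
case: ifP => //= /negbT; rewrite -ltNge => h; lra.
Qed.

Lemma w_pos_le {i j a} : 1 <= a -> (j <= i)%N -> 0 < w i a -> 0 < w j a.
Proof.
move=> a1; elim: i => [|i IH]; first by rewrite leqn0 => /eqP->.
rewrite leq_eqVlt => /orP[/eqP->//|ji] h; apply: IH => //.
rewrite lt_neqAle w_ge0 // andbT; apply/eqP=> E.
by move: h; rewrite (w_zeroS i a a1 (esym E)) ltxx.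
Qed.

Lemma w_zero_le {i j a} : 1 <= a -> (j <= i)%N -> w j a = 0 -> w i a = 0.
Proof.
move=> a1 ji h; apply/eqP; rewrite eq_le w_ge0 // andbT leNgt; apply/negP => /(w_pos_le a1 ji).
by rewrite h ltxx.
Qed.

Lemma sumw2_le k a : 1 <= a -> \sum_(j < k) (w j a) ^+ 2 <= a.
Proof.
move=> a1; have [/andP[h1 h2] _ h3] := st_inv k a a1.
have hp := mulr_ge0 h1 (le_trans h1 h2); lra.
Qed.
End W.


Section W2.
Context {R : realType}.
Implicit Types (a b : R).

Lemma wstep_lip (L s L' s' c : R) :
  `|L - L'| <= c -> `|s - s'| <= c ->
  `|(wstep (L, s)).1 - (wstep (L', s')).1| <= 2 * c /\
  `|(wstep (L, s)).2 - (wstep (L', s')).2| <= 2 * c.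
Proof.
rewrite !ler_norml => /andP[h1 h2] /andP[h3 h4] /=.
case: ifP => /= [|/negbT]; rewrite ?ltNge => ha;
case: ifP => /= [|/negbT]; rewrite ?ltNge => hb;
rewrite ?ler_norml; (split; apply/andP; split); try lra.
all: rewrite -?ltNge in ha hb; lra.
Qed.

Lemma st_lip k a b :
  `|(st k a).1 - (st k b).1| <= 2 ^+ k * `|a - b| /\
  `|(st k a).2 - (st k b).2| <= 2 ^+ k * `|a - b|.
Proof.
elim: k => [|k [IH1 IH2]].
  by rewrite /= expr0 mul1r subrr normr0; split => //.
rewrite !stS exprS -mulrA.
case: (st k a) IH1 IH2 => L s; case: (st k b) => L' s' /= IH1 IH2.
exact: wstep_lip.
Qed.

Lemma w_lip k a b : `|w k a - w k b| <= 2 ^+ k * `|a - b|.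
Proof. by rewrite !wE; have [] := st_lip k a b. Qed.

End W2.


Lemma ge_int_trans : transitive ge_int.
Proof. by move=> x y z; rewrite /ge_int => h1 h2; exact: le_trans h2 h1. Qed.

Lemma sorted_pos (m : seq int) : sorted ge_int m ->
  forall i, (i < size m)%N -> (0 < nth 0 m i) = (i < lm m)%N.
Proof.
elim: m => [//|x s IH] /= hp.
have hs := path_sorted hp.
have ha := order_path_min ge_int_trans hp.
case=> [|j] /=; rewrite /lm /=.
  case: ltrP => // hx.
  have -> : count (fun x0 : int => 0 < x0) s = 0%N.
    apply/eqP; rewrite -leqn0 leqNgt -has_count; apply/hasPn => y ys.
    by move/allP: ha => /(_ y ys); rewrite /ge_int => hy; rewrite -leNgt (le_trans hy hx).
  by [].
move=> hj; rewrite IH // /lm; case: ltrP => // hx.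
have -> : count (fun x0 : int => 0 < x0) s = 0%N.
  apply/eqP; rewrite -leqn0 leqNgt -has_count; apply/hasPn => y ys.
  by move/allP: ha => /(_ y ys); rewrite /ge_int => hy; rewrite -leNgt (le_trans hy hx).
by [].
Qed.

Lemma lm_le (m : seq int) : (lm m <= size m)%N.
Proof. exact: count_size. Qed.


Section L1.
Context {R : realType}.

Lemma sumsqR {m : seq int} {q : int} : \sum_(x <- m) x ^+ 2 = q ->
  \sum_(i < size m) ((nth 0 m i)%:~R : R) ^+ 2 = q%:~R.
Proof.
move=> h; rewrite -h (big_nth 0) big_mkord rmorph_sum /=.
by apply: eq_bigr => i _; rewrite rmorphXn.
Qed.

Lemma L1 (d e : int) (m : seq int) (a : R) : 0 <= d -> 0 <= e -> sorted ge_int m ->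
  \sum_(x <- m) x ^+ 2 = 2 * d * e + 1 -> 1 <= a ->
  Num.sqrt (a / 2) < mu_cls d e m a -> forall k, (k < lm m)%N -> 0 < w k a.
Proof.
move=> d0 e0 hs hq a1 hmu k hk.
have hkm : (k < size m)%N := leq_trans hk (lm_le m).
have ck : 0 < nth 0 m k by rewrite sorted_pos.
have ck1 : (1 : R) <= (nth 0 m k)%:~R by rewrite ler1z.
rewrite lt_neqAle w_ge0 // andbT; apply/eqP => wk0.
move: hmu; rewrite /mu_cls.
set D := ((d + e)%:~R : R).
set S := \sum_(i < size m) _.
set r := Num.sqrt (a / 2).
have r2 : r ^+ 2 = a / 2 by rewrite sqr_sqrtr //; lra.
have r0 : 0 < r by rewrite sqrtr_gt0; lra.
have d0' : (0 : R) <= d%:~R by rewrite ler0z.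
have e0' : (0 : R) <= e%:~R by rewrite ler0z.
have hD : D = d%:~R + e%:~R by rewrite /D intrD.
have [D0|Dpos] := eqVneq D 0.
  rewrite D0 invr0 mulr0 => /(lt_trans r0); by rewrite ltxx.
have Dp : 0 < D by rewrite lt_neqAle eq_sym Dpos /= hD; lra.
rewrite ltr_pdivlMr // => hS.
set c := fun i : 'I_(size m) => ((nth 0 m i)%:~R : R).
have hQ : \sum_(i < size m) (c i) ^+ 2 = 2 * d%:~R * e%:~R + 1.
  by rewrite /c (sumsqR hq) rmorphD !rmorphM.
have hB : \sum_(i < size m) (w i a) ^+ 2 <= a := sumw2_le (size m) a a1.
set B := \sum_(i < size m) (w i a) ^+ 2 in hB.
have key : forall t : R, t ^+ 2 <= t ^+ 2 * (2 * d%:~R * e%:~R + 1) - 2 * t * S + B.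
  move=> t.
  have -> : t ^+ 2 * (2 * d%:~R * e%:~R + 1) - 2 * t * S + B =
      \sum_(i < size m) (t * c i - w i a) ^+ 2.
    rewrite -hQ /S /B mulr_sumr mulr_sumr -sumrN -!big_split /=.
    by apply: eq_bigr => i _; rewrite /c; ring.
  rewrite (bigD1 (Ordinal hkm)) //= -wk0 subr0.
  have h1 : 0 <= \sum_(i < size m | i != Ordinal hkm) (t * c i - w i a) ^+ 2.
    by apply: sumr_ge0 => i _; exact: sqr_ge0.
  have h2 : t ^+ 2 <= (t * c (Ordinal hkm)) ^+ 2.
    rewrite exprMn -{1}[t ^+ 2]mulr1 ler_wpM2l ?sqr_ge0 //.
    rewrite /c /=; have := ck1; nra.
  lra.
have := key (2 * r / D).
have tD : 2 * r / D * D = 2 * r by rewrite mulfVK.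
set t := 2 * r / D in tD *.
move=> hk'.
have h3 : t ^+ 2 * (2 * d%:~R * e%:~R) + 2 * r ^+ 2 >= 2 * t * S by lra.
have h4 : (t * D) ^+ 2 * (2 * d%:~R * e%:~R) + 2 * r ^+ 2 * D ^+ 2 >= 2 * (t * D) * D * S.
  have hD2 : 0 <= D ^+ 2 by exact: sqr_ge0.
  have := ler_wpM2r hD2 h3; rewrite !exprMn; lra.
rewrite tD in h4.
have h5 : 2 * r * D * D * r < 2 * r * D * S.
  have hp : 0 < 2 * r * D by apply: mulr_gt0 => //; apply: mulr_gt0 => //; lra.
  have hS1 : D * r < S by rewrite mulrC.
  by rewrite -(mulrA (2 * r * D)) ltr_pM2l.
have h6 : 4 * (d%:~R * e%:~R) <= D ^+ 2.
  rewrite hD; have := sqr_ge0 ((d%:~R : R) - e%:~R); nra.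
have h7 : 0 < r ^+ 2 by exact: exprn_gt0.
have h8 : 0 <= r ^+ 2 * (D ^+ 2 - 4 * (d%:~R * e%:~R)).
  by apply: mulr_ge0; [exact: ltW | rewrite subr_ge0].
move: h4 h5 h8; rewrite !exprMn; nra.
Qed.
End L1.


Section Aff.
Context {R : realType}.

Definition conv (I : R -> Prop) := forall x y z, I x -> I y -> x <= z -> z <= y -> I z.

Lemma tie (L s : R) : 0 <= s -> L = 2 * s -> (wstep (wstep (L, s))).2 = 0.
Proof.
move=> s0 ->; rewrite /wstep.
case: ifP => [h1|/negbT h1]; rewrite -?ltNge in h1;
case: ifP => [h2|/negbT h2]; rewrite -?ltNge in h2 => /=; lra.
Qed.

Lemma affine_sign (I : R -> Prop) (A B : R) : conv I ->
  (forall x, I x -> A * x + B != 0) ->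
  forall x1 x2, I x1 -> I x2 -> 0 < A * x1 + B -> 0 < A * x2 + B.
Proof.
move=> cI hnz x1 x2 I1 I2 g1p; rewrite ltNge; apply/negP => g2n.
have g2n' : A * x2 + B < 0 by rewrite lt_neqAle hnz.
set g1 := A * x1 + B in g1p; set g2 := A * x2 + B in g2n g2n'.
set u := g1 - g2.
have up : 0 < u by rewrite /u; lra.
set t := g1 / u.
have tu : t * u = g1 by rewrite /t mulfVK // gt_eqF.
have t0 : 0 <= t by rewrite /t divr_ge0 // ltW.
have t1 : t <= 1 by rewrite /t ler_pdivrMr // mul1r /u; lra.
set z := x1 + (x2 - x1) * t.
have gz : A * z + B = 0.
  have : A * z + B = g1 - t * u by rewrite /z /u /g1 /g2; ring.
  by rewrite tu subrr.
have Iz : I z.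
  have [le12|lt21] := lerP x1 x2.
    apply: (cI x1 x2) => //; rewrite /z.
      by rewrite lerDl; apply: mulr_ge0 => //; lra.
    have : (x2 - x1) * t <= (x2 - x1) * 1 by apply: ler_wpM2l => //; lra.
    lra.
  apply: (cI x2 x1) => //; rewrite /z.
    have : (x1 - x2) * t <= (x1 - x2) * 1 by apply: ler_wpM2l => //; lra.
    lra.
  have : 0 <= (x1 - x2) * t by apply: mulr_ge0 => //; lra.
  lra.
by move: (hnz z Iz); rewrite gz eqxx.
Qed.

Lemma aff_st (I : R -> Prop) : conv I -> (forall x, I x -> 1 <= x) ->
  forall k, (forall x, I x -> 0 < w k.+1 x) ->
  exists a1 b1 a2 b2 : R, (a1 * b2 - a2 * b1 = 1 \/ a1 * b2 - a2 * b1 = -1) /\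
    forall x, I x -> st k x = (a1 * x + b1, a2 * x + b2).
Proof.
move=> cI I1; elim=> [|k IH] H.
  exists 1, 0, 0, 1; split; first by left; ring.
  by move=> x _; rewrite /st /=; congr (_, _); ring.
have H' : forall x, I x -> 0 < w k.+1 x.
  by move=> x Ix; apply: (w_pos_le (I1 x Ix) _ (H x Ix)).
have [a1 [b1 [a2 [b2 [hdet hst]]]]] := IH H'.
have hnz : forall x, I x -> (a1 - 2 * a2) * x + (b1 - 2 * b2) != 0.
  move=> x Ix; apply/eqP => g0.
  have := H x Ix; rewrite wE !stS hst // tie; first by rewrite ltxx.
    have := w_ge0 k x (I1 x Ix); rewrite wE hst //.
  lra.
have [[x0 [Ix0 gp]]|nop] := classic (exists x0, I x0 /\ 0 < (a1 - 2 * a2) * x0 + (b1 - 2 * b2)).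
  exists (a1 - a2), (b1 - b2), a2, b2; split.
    by case: hdet => h; [left|right]; rewrite -h; ring.
  move=> x Ix; rewrite stS hst //=.
  have gx := @affine_sign I _ _ cI hnz x0 x Ix0 Ix gp.
  by rewrite ifT; [congr (_, _); ring | lra].
exists a2, b2, (a1 - a2), (b1 - b2); split.
  have -> : a2 * (b1 - b2) - (a1 - a2) * b2 = - (a1 * b2 - a2 * b1) by ring.
  by case: hdet => ->; [right|left; rewrite opprK].
move=> x Ix; rewrite stS hst //=.
have gx : (a1 - 2 * a2) * x + (b1 - 2 * b2) < 0.
  rewrite lt_neqAle hnz //=; rewrite leNgt; apply/negP => gp.
  by apply: nop; exists x.
by rewrite ifF; [congr (_, _); ring | apply/negbTE; rewrite -ltNge; lra].
Qed.
End Aff.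


Section Core.
Context {R : realType}.

Lemma sqrt_lip (a b : R) : 1 <= a -> 1 <= b ->
  `|Num.sqrt (a / 2) - Num.sqrt (b / 2)| <= `|a - b|.
Proof.
move=> a1 b1.
set p := Num.sqrt (a / 2); set q := Num.sqrt (b / 2).
have p2 : p ^+ 2 = a / 2 by rewrite sqr_sqrtr //; lra.
have q2 : q ^+ 2 = b / 2 by rewrite sqr_sqrtr //; lra.
have p0 : 0 <= p by exact: sqrtr_ge0.
have q0 : 0 <= q by exact: sqrtr_ge0.
have ph : 1 / 2 <= p by rewrite leNgt; apply/negP => h; nra.
have qh : 1 / 2 <= q by rewrite leNgt; apply/negP => h; nra.
have e : (p - q) * (p + q) = (a - b) / 2.
  have -> : (p - q) * (p + q) = p ^+ 2 - q ^+ 2 by ring.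
  by rewrite p2 q2; field.
have n1 := ler_norm (a - b); have n2 := ler_norm (b - a); rewrite distrC in n2.
rewrite ler_norml; apply/andP; split.
  have [pq|qp] := lerP p q; last lra.
  have : (q - p) * 1 <= (q - p) * (p + q) by apply: ler_wpM2l; lra.
  nra.
have [pq|qp] := lerP p q; first lra.
have : (p - q) * 1 <= (p - q) * (p + q) by apply: ler_wpM2l; lra.
nra.
Qed.

Lemma concave_aff (x0 t y al be : R) : 0 <= x0 -> x0 < t -> t < y ->
  al * x0 + be <= Num.sqrt (x0 / 2) -> al * y + be <= Num.sqrt (y / 2) ->
  al * t + be <= Num.sqrt (t / 2).
Proof.
move=> x00 h1 h2.
set p := Num.sqrt (x0 / 2); set q := Num.sqrt (y / 2); set r := Num.sqrt (t / 2).
have p2 : p ^+ 2 = x0 / 2 by rewrite sqr_sqrtr //; lra.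
have q2 : q ^+ 2 = y / 2 by rewrite sqr_sqrtr //; lra.
have r2 : r ^+ 2 = t / 2 by rewrite sqr_sqrtr //; lra.
have p0 : 0 <= p by exact: sqrtr_ge0.
have q0 : 0 <= q by exact: sqrtr_ge0.
have r0 : 0 <= r by exact: sqrtr_ge0.
move=> hp hq.
have hyx : 0 < y - x0 by lra.
have E : (y - x0) * (al * t + be) = (y - t) * (al * x0 + be) + (t - x0) * (al * y + be) by ring.
have H1 : (y - x0) * (al * t + be) <= (y - t) * p + (t - x0) * q.
  rewrite E; apply: lerD; apply: ler_wpM2l => //; lra.
set U := (y - t) * p + (t - x0) * q in H1.
have HU : U ^+ 2 <= ((y - x0) * r) ^+ 2.
  have eqV : ((y - x0) * r) ^+ 2 = (y - x0) * ((y - t) * p ^+ 2 + (t - x0) * q ^+ 2).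
    by rewrite exprMn r2 p2 q2; field.
  rewrite eqV.
  have hh : 0 <= (y - t) * (t - x0) * (p - q) ^+ 2.
    apply: mulr_ge0; [apply: mulr_ge0; lra | exact: sqr_ge0].
  rewrite /U; nra.
have HU2 : U <= (y - x0) * r.
  have V0 : 0 <= (y - x0) * r by apply: mulr_ge0 => //; lra.
  rewrite leNgt; apply/negP => h.
  have : 0 < (U - (y - x0) * r) * (U + (y - x0) * r) by apply: mulr_gt0; lra.
  move: HU; rewrite !expr2; nra.
have : (y - x0) * (al * t + be) <= (y - x0) * r by lra.
by rewrite ler_pM2l.
Qed.

Lemma ext_pt {P : R -> Prop} {I : R -> Prop} {c del : R} :
  maximal_good_interval P I -> 1 <= c -> 0 < del ->
  (forall z, 1 <= z -> `|z - c| < del -> P z) ->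
  (exists t, I t /\ `|t - c| < del) -> I c.
Proof.
move=> [[[x0 Ix0] hIP cI op] mx] c1 dp hP [t [It tc]].
pose J z := I z \/ (1 <= z /\ `|z - c| < del).
have gJ : good_interval P J.
  split.
  - by exists x0; left.
  - by move=> z [/hIP //|[z1 hz]]; split => //; apply: hP.
  - move=> x y z Jx Jy xz zy.
    have ball : forall u v, 1 <= u -> `|u - c| < del -> 1 <= v -> `|v - c| < del ->
        u <= z -> z <= v -> J z.
      move=> u v u1 hu v1 hv uz zv; right; split; first lra.
      rewrite ltr_norml; move: hu hv; rewrite !ltr_norml => /andP[? ?] /andP[? ?]; apply/andP; split; lra.
    case: Jx => [Ix|[x1 hx]]; case: Jy => [Iy|[y1 hy]].
    + by left; apply: (cI x y).
    + have [tz|zt] := lerP t z.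
        by apply: (ball t y) => //; have [] := hIP t It.
      by left; apply: (cI x t) => //; apply: ltW.
    + have [tz|zt] := lerP t z.
        by left; apply: (cI t y).
      by apply: (ball x t) => //; [have [] := hIP t It | apply: ltW].
    + exact: (ball x y).
  - move=> x [Ix|[x1 hx]].
      have [eps ep he] := op x Ix; exists eps => // y y1 hy; left; exact: he.
    exists (del - `|x - c|); first lra.
    move=> y y1 hy; right; split => //.
      have := ler_distD x y c; lra.
have := mx J gJ (fun z Iz => or_introl Iz) c; apply.
by right; split => //; rewrite subrr normr0.
Qed.


Lemma core (mu : R -> R) (I : R -> Prop) (K al be Bd : R) :
  maximal_good_interval (fun a => Num.sqrt (a / 2) < mu a) I -> 0 <= K ->
  (forall a b, 1 <= a -> 1 <= b -> `|mu a - mu b| <= K * `|a - b|) ->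
  (forall x, I x -> x <= Bd) -> ~ I 1 ->
  (forall x, I x -> mu x = al * x + be) -> False.
Proof.
move=> mI K0 lip hBd nI1 haff.
have mI' := mI; move: mI' => [[[x0 Ix0] hIP cI op] mx].
have I1 : forall x, I x -> 1 <= x by move=> x /hIP [].
have hsI : has_sup I by split; [exists x0 | exists Bd => z /hBd].
have hiI : has_inf I by split; [exists x0 | exists 1 => z /I1].
set y := sup I; set x := inf I.
have hub : forall t, I t -> t <= y.
  move=> t It; have := sup_upper_bound hsI; rewrite /ubound /= => h; exact: h.
have hlb : forall t, I t -> x <= t.
  move=> t It; have := ge_inf hiI.2; rewrite /lbound /= => h; exact: h.
have x1 : 1 <= x by apply: lb_le_inf; [exists x0 | move=> z /I1].
have y1 : 1 <= y by have := hub x0 Ix0; have := I1 x0 Ix0; lra.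
have ady : forall eps, 0 < eps -> exists t, I t /\ `|t - y| < eps.
  move=> eps ep; have [t It ht] := sup_adherent ep hsI; rewrite -/y in ht.
  exists t; split => //; have := hub t It; rewrite ltr_norml; move=> h; apply/andP; split; lra.
have adx : forall eps, 0 < eps -> exists t, I t /\ `|t - x| < eps.
  move=> eps ep; have [t It ht] := inf_adherent ep hiI; rewrite -/x in ht.
  exists t; split => //; have := hlb t It; rewrite ltr_norml; move=> h; apply/andP; split; lra.
have nIy : ~ I y.
  move=> Iy; have [eps ep he] := op y Iy.
  have : I (y + eps / 2) by apply: he; [lra | rewrite addrC addKr ger0_norm; lra].
  move/hub; lra.
have nIx : ~ I x.
  move=> Ix; have [eps ep he] := op x Ix.
  have xg1 : 1 < x by rewrite lt_neqAle x1 andbT; apply/eqP => ex; apply: nI1; rewrite ex.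
  have [el|le] := lerP eps (x - 1).
    have : I (x - eps / 2) by apply: he; [lra | rewrite addrC addKr normrN ger0_norm; lra].
    move/hlb; lra.
  have : I (x - (x - 1) / 2) by apply: he; [lra | rewrite addrC addKr normrN ger0_norm; lra].
  move/hlb; lra.
have notP : forall c, 1 <= c -> ~ I c ->
    (forall eps, 0 < eps -> exists t, I t /\ `|t - c| < eps) -> mu c <= Num.sqrt (c / 2).
  move=> c c1 nIc adc; rewrite leNgt; apply/negP => hc.
  apply: nIc; set del := (mu c - Num.sqrt (c / 2)) / (K + 2).
  have dp : 0 < del by apply: divr_gt0; lra.
  apply: (ext_pt mI c1 dp); last by apply: adc.
  move=> z z1 hz.
  have h1 := lip z c z1 c1.
  have h2 := sqrt_lip z c z1 c1.
  have h3 : (K + 1) * `|z - c| <= (K + 2) * del.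
    have : (K + 1) * `|z - c| <= (K + 2) * `|z - c| by apply: ler_wpM2r => //; lra.
    have : (K + 2) * `|z - c| <= (K + 2) * del by apply: ler_wpM2l; lra; apply: ltW.
    lra.
  have h4 : (K + 2) * del = mu c - Num.sqrt (c / 2) by rewrite /del mulrC divfK //; lra.
  move: h1 h2; rewrite !ler_norml => /andP[h1 h1'] /andP[h2 h2'].
  have nzc := normr_ge0 (z - c).
  have : K * `|z - c| + `|z - c| < mu c - Num.sqrt (c / 2).
    rewrite -h4; have : (K + 1) * `|z - c| < (K + 2) * del.
      have : (K + 1) * `|z - c| < (K + 1) * del by rewrite ltr_pM2l //; lra.
      have : (K + 1) * del <= (K + 2) * del by apply: ler_wpM2r; lra; apply: ltW.
      lra.
    lra.
  lra.
have affle : forall c, 1 <= c -> mu c <= Num.sqrt (c / 2) ->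
    (forall eps, 0 < eps -> exists t, I t /\ `|t - c| < eps) -> al * c + be <= Num.sqrt (c / 2).
  move=> c c1 hc adc; apply/ler_addgt0Pr => eps ep.
  set Q := K + `|al| + 1.
  have Qp : 0 < Q by rewrite /Q; have := normr_ge0 al; lra.
  have [t [It ht]] := adc (eps / Q) (divr_gt0 ep Qp).
  have h1 := lip t c (I1 t It) c1.
  have h2 : al * (c - t) <= `|al| * `|t - c|.
    by rewrite distrC -normrM; apply: ler_norm.
  have h3 : Q * `|t - c| < eps by rewrite -ltr_pdivlMl // mulrC.
  have h4 : K * `|t - c| + `|al| * `|t - c| <= Q * `|t - c|.
    rewrite /Q -mulrDl; apply: ler_wpM2r => //; lra.
  move: h1; rewrite ler_norml => /andP[_ h1].
  have := haff t It; lra.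
have fy := notP y y1 nIy ady.
have fx := notP x x1 nIx adx.
have ly := affle y y1 fy ady.
have lx := affle x x1 fx adx.
have xt : x < x0 by rewrite lt_neqAle hlb // andbT; apply/eqP => ex; apply: nIx; rewrite ex.
have ty : x0 < y by rewrite lt_neqAle hub // andbT; apply/eqP => ey; apply: nIy; rewrite -ey.
have := @concave_aff x x0 y al be (le_trans ler01 x1) xt ty lx ly.
have [_ /= hP] := hIP x0 Ix0; rewrite -haff //; lra.
Qed.

End Core.


Section Main.
Context {R : realType}.

Lemma aff_sum (I : R -> Prop) (n : nat) (F : 'I_n -> R -> R) :
  (forall i, exists al be, forall x, I x -> F i x = al * x + be) ->
  exists al be, forall x, I x -> \sum_(i < n) F i x = al * x + be.
Proof.
elim: n F => [|n IH] F hF.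
  by exists 0, 0 => x _; rewrite big_ord0; ring.
have [al [be h1]] := IH (fun i => F (widen_ord (leqnSn n) i)) (fun i => hF _).
have [al' [be' h2]] := hF ord_max.
exists (al + al'), (be + be') => x Ix.
rewrite big_ord_recr /= h1 // h2 //; ring.
Qed.

Lemma untie (L s : R) : 0 < s -> 0 < (wstep (L, s)).2 ->
  (wstep (wstep (L, s))).2 = 0 -> L = 2 * s.
Proof.
move=> s0; rewrite /wstep.
case: ifP => [h1|/negbT h1]; rewrite -?ltNge in h1 => /= h;
case: ifP => [h2|/negbT h2]; rewrite -?ltNge in h2 => /=; lra.
Qed.

Lemma w1_eq0 (x : R) : 1 <= x -> w 1 x = 0 -> x = 1.
Proof.
move=> x1; rewrite wE stS /st /= /wstep.
case: ifP => [h|/negbT h] /=; lra.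
Qed.

Lemma w_1 n : (0 < n)%N -> w n (1 : R) = 0.
Proof.
move=> n0; apply: (w_zero_le (le_refl 1) n0).
rewrite wE stS /st /= /wstep ifF //=; [lra | apply/negbTE; rewrite -ltNge; lra].
Qed.

End Main.


Section Main2.
Context {R : realType}.

Lemma Dnz (d e : int) (m : seq int) (a : R) :
  Num.sqrt (a / 2) < mu_cls d e m a -> ((d + e)%:~R : R) != 0.
Proof.
apply: contraTneq => D0; rewrite /mu_cls D0 invr0 mulr0 -leNgt; exact: sqrtr_ge0.
Qed.

Lemma main (d e : int) (m : seq int) (I : R -> Prop) :
  0 <= d -> 0 <= e -> sorted ge_int m -> all (fun x : int => 0 <= x) m ->
  \sum_(x <- m) x ^+ 2 = 2 * d * e + 1 ->
  maximal_good_interval (fun a : R => Num.sqrt (a / 2) < mu_cls d e m a) I ->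
  exists a0 : R,
    [/\ I a0, wlen_eq a0 (lm m),
        (forall a1 : R, I a1 -> wlen_eq a1 (lm m) -> a1 = a0) &
        (forall a : R, I a -> wlen_le a0 a)].
Proof.
move=> d0 e0 hs hnn hq mI.
have mI' := mI; move: mI' => [[[x0 Ix0] hIP cI op] mx].
set n := lm m.
have I1 : forall x, I x -> 1 <= x by move=> x /hIP [].
have hL1 : forall x, I x -> forall k, (k < n)%N -> 0 < w k x.
  move=> x Ix; have [x1 Px] := hIP x Ix; exact: (@L1 R d e m x d0 e0 hs hq x1 Px).
set D := ((d + e)%:~R : R).
have Dp : 0 < D.
  rewrite lt_neqAle eq_sym (Dnz _ _ _ _ (hIP x0 Ix0).2) /= /D intrD.
  have : (0 : R) <= d%:~R by rewrite ler0z.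
  have : (0 : R) <= e%:~R by rewrite ler0z.
  lra.
have c0 : forall i, (n <= i)%N -> nth 0 m i = 0.
  move=> i ni; have [im|mi] := ltnP i (size m); last by rewrite nth_default.
  have := @sorted_pos m hs i im; rewrite -/n ltnNge ni /= => hp.
  have : 0 <= nth 0 m i by move/all_nthP: hnn; apply.
  by rewrite le_eqVlt hp orbF eq_sym => /eqP.
have n1 : (0 < n)%N.
  rewrite lt0n; apply/negP => /eqP n0.
  have [_ Px0] := hIP x0 Ix0; move: Px0; rewrite /mu_cls big1 ?mul0r.
    by rewrite ltNge sqrtr_ge0.
  by move=> i _; rewrite c0 ?n0 // mul0r.
have lenE : forall x, I x -> w n x = 0 -> wlen_eq x n.
  move=> x Ix wn i; split.
    by move=> h; rewrite ltnNge; apply/negP => ni; move: h; rewrite (w_zero_le (I1 x Ix) ni wn) ltxx.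
  exact: hL1.
have lenE' : forall x, I x -> wlen_eq x n -> w n x = 0.
  move=> x Ix hw; apply/eqP; rewrite eq_le w_ge0 ?I1 // andbT leNgt; apply/negP.
  by move/hw; rewrite ltnn.
have [a0 [Ia0 wa0]] : exists a0, I a0 /\ w n a0 = 0.
  apply: NNPP => hne.
  have H : forall x, I x -> 0 < w n x.
    move=> x Ix; rewrite lt_neqAle w_ge0 ?I1 // andbT eq_sym; apply/eqP => h.
    by apply: hne; exists x.
  have [al [be haff]] : exists al be, forall x, I x -> mu_cls d e m x = al * x + be.
    have [al [be hS]] : exists al be, forall x, I x ->
        \sum_(i < size m) (nth 0 m i)%:~R * w i x = al * x + be.
      apply: aff_sum => i.
      have [ni|in_] := leqP n i.
        by exists 0, 0 => x _; rewrite c0 // mul0r; ring.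
      have [a1 [b1 [a2 [b2 [_ hst]]]]] := @aff_st R I cI I1 i
          (fun x Ix => w_pos_le (I1 x Ix) in_ (H x Ix)).
      by exists ((nth 0 m i)%:~R * a2), ((nth 0 m i)%:~R * b2) => x Ix;
         rewrite wE hst //=; ring.
    exists (al / D), (be / D) => x Ix; rewrite /mu_cls -/D hS //; field.
    by rewrite -intrD -/D gt_eqF.
  set K := (\sum_(i < size m) `|((nth 0 m i)%:~R : R)| * 2 ^+ i) / D.
  have K0 : 0 <= K.
    by apply: divr_ge0; [apply: sumr_ge0 => i _; apply: mulr_ge0 => //; apply: exprn_ge0 | apply: ltW].
  have lip : forall a b : R, 1 <= a -> 1 <= b ->
      `|mu_cls d e m a - mu_cls d e m b| <= K * `|a - b|.
    have hDi : `|D^-1| = D^-1 by rewrite ger0_norm // invr_ge0 ltW.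
    have hDi' : 0 <= D^-1 by rewrite invr_ge0 ltW.
    move=> a b _ _; rewrite /mu_cls -/D -mulrBl normrM hDi.
    have -> : K * `|a - b| = ((\sum_(i < size m) `|((nth 0 m i)%:~R : R)| * 2 ^+ i) * `|a - b|) * D^-1.
      by rewrite /K; ring.
    apply: ler_wpM2r => //.
    rewrite -sumrB mulr_suml.
    apply: le_trans (ler_norm_sum _ _ _) _; apply: ler_sum => i _.
    rewrite -mulrBr normrM -mulrA ler_wpM2l //; exact: w_lip.
  set Bd := 2 * ((\sum_(i < size m) `|((nth 0 m i)%:~R : R)|) / D) ^+ 2.
  have hBd : forall x, I x -> x <= Bd.
    move=> x Ix; have [x1 Px] := hIP x Ix.
    have hmu : mu_cls d e m x <= (\sum_(i < size m) `|((nth 0 m i)%:~R : R)|) / D.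
      rewrite /mu_cls -/D; apply: ler_wpM2r; first by rewrite invr_ge0 ltW.
      apply: ler_sum => i _.
      have ci : (0 : R) <= (nth 0 m i)%:~R.
        by rewrite ler0z; move/all_nthP: hnn; apply.
      rewrite ger0_norm // -[leRHS]mulr1; apply: ler_wpM2l => //; exact: w_le1 i x (I1 x Ix).
    set r := Num.sqrt (x / 2) in Px.
    have r2 : r ^+ 2 = x / 2 by rewrite sqr_sqrtr //; lra.
    have r0 : 0 <= r by exact: sqrtr_ge0.
    have : r < (\sum_(i < size m) `|((nth 0 m i)%:~R : R)|) / D by apply: lt_le_trans hmu.
    rewrite /Bd; nra.
  have nI1 : ~ I 1 by move=> I1'; have := H 1 I1'; rewrite w_1 // ltxx.
  exact: (@core R _ _ K al be Bd mI K0 lip hBd nI1 haff).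
exists a0; split => //.
- exact: lenE.
- move=> a1 Ia1 /(lenE' a1 Ia1) wa1.
  case: n wa0 wa1 hL1 n1 {c0 lenE lenE'} => [//|[|n']] wa0 wa1 hL1 _.
    by rewrite (w1_eq0 a1 (I1 a1 Ia1) wa1) (w1_eq0 a0 (I1 a0 Ia0) wa0).
  have [p1 [q1 [p2 [q2 [hdet hst]]]]] := @aff_st R I cI I1 n'
      (fun x Ix => hL1 x Ix n'.+1 (ltnSn _)).
  have g0 : forall x, I x -> w n'.+2 x = 0 -> (p1 - 2 * p2) * x + (q1 - 2 * q2) = 0.
    move=> x Ix wx.
    have hs0 : 0 < (st n' x).2 by rewrite -wE; apply: hL1 => //; apply: leqW.
    have hs1 : 0 < (wstep (st n' x)).2 by rewrite -stS -wE; apply: hL1.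
    have hs2 : (wstep (wstep (st n' x))).2 = 0 by rewrite -!stS -wE.
    move: hs0 hs1 hs2; rewrite hst // => hs0 hs1 hs2.
    have h := @untie R _ _ hs0 hs1 hs2.
    transitivity ((p1 * x + q1) - 2 * (p2 * x + q2)); first ring.
    by rewrite h subrr.
  have ga1 := g0 a1 Ia1 wa1; have ga0 := g0 a0 Ia0 wa0.
  apply/eqP; apply: contraT => ne.
  have hp : p1 - 2 * p2 = 0.
    have : (p1 - 2 * p2) * (a1 - a0) = 0.
      transitivity (((p1 - 2 * p2) * a1 + (q1 - 2 * q2)) - ((p1 - 2 * p2) * a0 + (q1 - 2 * q2))); first ring.
      by rewrite ga1 ga0 subrr.
    by move/eqP; rewrite mulf_eq0 => /orP[/eqP //|]; rewrite subr_eq0 (negbTE ne).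
  have hq' : q1 - 2 * q2 = 0 by move: ga1; rewrite hp mul0r add0r.
  have : p1 * q2 - p2 * q1 = 0.
    have -> : p1 = 2 * p2 by lra.
    have -> : q1 = 2 * q2 by lra.
    ring.
  case: hdet => ->; lra.
- move=> a Ia i hi; apply: hL1 => //.
  by rewrite ltnNge; apply/negP => ni; move: hi; rewrite (w_zero_le (I1 a0 Ia0) ni wa0) ltxx.
Qed.

End Main2.


Theorem lemma4p13 (R : realType) (d e : int) (m : seq int) (I : R -> Prop) :
  in_calE d e m ->
  (exists a : R, 1 <= a /\ Num.sqrt (a / 2) < mu_cls d e m a) ->
  maximal_good_interval (fun a : R => Num.sqrt (a / 2) < mu_cls d e m a) I ->
  exists a0 : R,
    [/\ I a0, wlen_eq a0 (lm m),
        (forall a1 : R, I a1 -> wlen_eq a1 (lm m) -> a1 = a0) &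
        (forall a : R, I a -> wlen_le a0 a)].
Proof.
move=> hE _ mI.
have [[[x0 Ix0] hIP _ _] _] := mI.
case: hE => [[hd [he _]]|[[d0 e0] [hs hnn] _ hq _]].
  have := Dnz _ _ _ _ (hIP x0 Ix0).2; by rewrite hd he addr0 eqxx.
exact: (@main R d e m I d0 e0 hs hnn hq mI).
Qed.
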